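(* Let $\xi=e^{i\pi/5}$, $\tau=\frac{1+\sqrt5}{2}$. For $n\in\mathbb{N}$ let $L(n)=\{\sum_{j=0}^9 n_j\xi^j: n_j\in\mathbb{N}_0,\ \sum_j n_j\le n\}\cap\mathbb{R}$. Let $\mathbb{Z}[\tau]=\mathbb{Z}+\mathbb{Z}\tau$ and let $x\mapsto x'$ be the automorphism $a+b\sqrt5\mapsto a-b\sqrt5$ of $\mathbb{Q}[\sqrt5]$. For a bounded interval $\Omega$ let $\Sigma(\Omega)=\{x\in\mathbb{Z}[\tau]: x'\in\Omega\}$. Then $L(n)\subset\Sigma([-n,n])\cap[-n,n]$.
   Context: $\Sigma(\Omega)$ is the one-dimensional cut-and-project quasicrystal with acceptance window $\Omega$. *)

(* Defs.v *)
From HB Require Import structures.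
From mathcomp Require Import all_boot all_order all_algebra.
From mathcomp Require Import all_classical all_reals all_analysis.
From mathcomp Require Import complex.
Set Implicit Arguments. Unset Strict Implicit. Unset Printing Implicit Defensive.
Import Order.TTheory GRing.Theory Num.Theory.
Local Open Scope ring_scope.
Local Open Scope classical_set_scope.
Local Open Scope complex_scope.

Definition xi (R : realType) : R[i] := (cos (pi / 5%:R)) +i* (sin (pi / 5%:R)).

Definition tau (R : realType) : R := (1 + Num.sqrt 5%:R) / 2%:R.
Definition tau' (R : realType) : R := (1 - Num.sqrt 5%:R) / 2%:R.

(* L(n) = { sum_{j=0}^9 n_j xi^j : n_j in N_0, sum n_j <= n } ∩ R,
   real elements viewed as elements x of R via x%:C *)
Definition Lset (R : realType) (n : nat) : set R :=
  [set x : R | exists m : 'I_10 -> nat,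
     (\sum_(j < 10) m j <= n)%N /\
     \sum_(j < 10) (m j)%:R * (xi R) ^+ j = x%:C].

Definition Ztau (R : realType) : set R :=
  [set x : R | exists a b : int, x = a%:~R + b%:~R * tau R].

(* Sigma(Omega) = { x in Z[tau] : x' in Omega }, where for x = a + b tau
   (a, b integers; representation unique since sqrt 5 is irrational)
   x' = a + b tau'. *)
Definition Sigma (R : realType) (Omega : set R) : set R :=
  [set x : R | exists a b : int, x = a%:~R + b%:~R * tau R /\
                                 Omega (a%:~R + b%:~R * tau' R)].

(* Main.v *)
Require Import Defs.
From HB Require Import structures.
From mathcomp Require Import all_boot all_order all_algebra.
From mathcomp Require Import all_classical all_reals all_analysis.
From mathcomp Require Import complex.
From mathcomp Require Import zify ring lra.
Import Order.TTheory GRing.Theory Num.Theory.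
Local Open Scope ring_scope.
Local Open Scope classical_set_scope.
Local Open Scope complex_scope.

Lemma mulC (R : rcfType) (a b c d : R) : (a +i* b) * (c +i* d) = (a*c - b*d) +i* (a*d + b*c).
Proof. by []. Qed.
Lemma addC (R : rcfType) (a b c d : R) : (a +i* b) + (c +i* d) = (a+c) +i* (b+d).
Proof. by []. Qed.
Lemma natC (R : rcfType) (k : nat) : (k%:R : R[i]) = (k%:R) +i* 0.
Proof. elim: k => // k IH. rewrite !mulrS IH addC addr0 //. Qed.
Lemma powC (R : realType) (t : R) (j : nat) :
  (cos t +i* sin t) ^+ j = cos (j%:R * t) +i* sin (j%:R * t).
Proof.
elim: j => [|j IH]; first by rewrite expr0 mul0r cos0 sin0.
rewrite exprSr IH mulC -natr1 mulrDl mul1r cosD sinD; congr Complex; ring.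
Qed.
Lemma sumC (R : rcfType) (F G : 'I_10 -> R) :
  \sum_(j < 10) (F j +i* G j) = (\sum_(j<10) F j) +i* (\sum_(j<10) G j).
Proof.
elim/big_rec3: _ => // i y1 y2 y3 _ ->. by rewrite addC.
Qed.
Lemma no_sqrt5_nat (u v : nat) : (u ^ 2 = 5 * v ^ 2)%N -> v = 0%N.
Proof.
move=> E; case: (posnP v) => [//|v0].
have u0 : (0 < u)%N.
  case: (posnP u) => [u0|//]; move: E; rewrite u0 /= => /esym/eqP.
  by rewrite muln_eq0 expn_eq0 /=; lia.
have := congr1 (logn 5) E.
rewrite lognX lognM ?expn_gt0 ?v0 // lognX.
have -> : logn 5 5 = 1%N by rewrite logn_prime.
lia.
Qed.

Lemma no_sqrt5_int (a b : int) : (a ^+ 2 = 5 * b ^+ 2)%R -> b = 0.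
Proof.
move=> /(congr1 absz); rewrite abszM !abszX => /(@no_sqrt5_nat _ _).
by move=> /eqP; rewrite absz_eq0 => /eqP.
Qed.
Lemma tau_irr (R : realType) (a b : int) :
  (a%:~R : R) + b%:~R * ((1 + Num.sqrt 5%:R) / 2%:R) = 0 -> a = 0 /\ b = 0.
Proof.
move=> E.
have s5 : Num.sqrt (5%:R : R) ^+ 2 = 5%:R by rewrite sqr_sqrtr // ler0n.
have key : (2:R) * a%:~R + b%:~R = - (b%:~R * Num.sqrt 5%:R).
  move: E; set q := Num.sqrt _; move=> E.
  have -> : (2:R) * a%:~R + b%:~R = 2 * (a%:~R + b%:~R * ((1 + q) / 2%:R)) - b%:~R * q.
    by field; lra.
  by rewrite E mulr0 sub0r.
have E2 : ((2 * a + b) ^+ 2 : int)%:~R = ((5 * b ^+ 2 : int)%:~R : R).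
  rewrite !(rmorphXn, rmorphD, rmorphM) /=.
  have -> : (1%:~R : R) = 1 by [].
  have -> : (1 + 1 : R) = 2 by [].
  rewrite key sqrrN exprMn s5; ring.
move/eqP: E2; rewrite eqr_int => /eqP/no_sqrt5_int b0.
split => //; move: E; rewrite b0 mul0r addr0 => /eqP; rewrite intr_eq0 => /eqP //.
Qed.
Lemma cosDpi' (R : realType) (x : R) : cos (x + pi) = - cos x.
Proof. exact: cosDpi. Qed.
Lemma sinDpi' (R : realType) (x : R) : sin (x + pi) = - sin x.
Proof. exact: sinDpi. Qed.

Lemma cos_pi5 (R : realType) :
  cos (pi / 5%:R : R) = (1 + Num.sqrt 5%:R) / 4%:R.
Proof.
set t := pi / 5%:R.
have pi0 := @pi_gt0 R.
have ht : pi = t *+ 5 by rewrite /t -mulr_natr mulfVK // pnatr_eq0.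
have c0 : 0 < cos t.
  apply: cos_gt0_pihalf; rewrite /t; apply/andP; split.
    by apply: (@lt_trans _ _ 0); [rewrite oppr_lt0; exact: divr_gt0 | exact: divr_gt0].
  rewrite ltr_pM2l //; rewrite ltf_pV2 ?posrE ?ltr0n //; by rewrite ltr_nat.
have e3 : cos (t *+ 3) = - cos (t *+ 2).
  have -> : t *+ 3 = - (t *+ 2) + pi by rewrite ht; ring.
  by rewrite cosDpi' cosN.
have c3 : cos (t *+ 3) = cos (t *+ 2) * cos t - sin (t *+ 2) * sin t.
  by rewrite -cosD; congr cos; ring.
rewrite cos_mulr2n sin_mulr2n in c3 e3.
have hs := sin2cos2 t.
set c := cos t in c0 c3 e3 hs *; set s := sin t in c3 hs.
have hq : (c + 1) * (4 * c ^+ 2 - 2 * c - 1) = 0.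
  rewrite e3 in c3. nra.
have h4 : 4 * c ^+ 2 - 2 * c - 1 = 0.
  by move: hq => /eqP; rewrite mulf_eq0 => /orP [/eqP|/eqP //]; lra.
have s5 : Num.sqrt (5%:R : R) ^+ 2 = 5%:R by rewrite sqr_sqrtr // ler0n.
have s50 : 0 <= Num.sqrt (5%:R : R) by [].
set q := Num.sqrt _ in s5 s50 *.
have : (4 * c - 1 - q) * (4 * c - 1 + q) = 0 by nra.
move=> /eqP; rewrite mulf_eq0 => /orP [/eqP h|/eqP h]; first by rewrite (_ : 1 + q = c * 4) ?mulfK ?pnatr_eq0 //; lra.
nra.
Qed.
Definition cv {R : realType} (T : R) (j : nat) : R :=
  match j with 0 => 1 | 1 => T/2 | 2 => (T-1)/2 | 3 => -((T-1)/2) | 4 => -(T/2)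
  | 5 => -1 | 6 => -(T/2) | 7 => -((T-1)/2) | 8 => (T-1)/2 | _ => T/2 end.
Definition sv {R : realType} (T s : R) (j : nat) : R :=
  match j with 0 => 0 | 1 => s | 2 => T * s | 3 => T * s | 4 => s
  | 5 => 0 | 6 => - s | 7 => -(T * s) | 8 => -(T * s) | _ => - s end.

Lemma trig_tab (R : realType) (j : nat) : (j < 10)%N ->
  let t := pi / 5%:R : R in let T := (1 + Num.sqrt 5%:R) / 2%:R : R in
  cos (j%:R * t) = cv T j /\ sin (j%:R * t) = sv T (sin t) j.
Proof.
move=> hj t T.
have pi0 := @pi_gt0 R.
have ht : pi = t *+ 5 by rewrite -mulr_natr /t mulfVK // pnatr_eq0.
have hc : cos t = T / 2 by rewrite /t cos_pi5 /T; (field; try lra).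
have s5 : Num.sqrt (5%:R : R) ^+ 2 = 5%:R by rewrite sqr_sqrtr // ler0n.
have hT : T ^+ 2 = T + 1.
  rewrite /T; move: s5; set q := Num.sqrt _ => s5.
  rewrite (_ : ((1 + q) / 2) ^+ 2 = (1 + 2 * q + q ^+ 2) / 4); last by (field; try lra).
  rewrite s5; (field; try lra).
have c2 : cos (t *+ 2) = (T - 1) / 2 by rewrite cos_mulr2n hc; rewrite (_ : (T/2)^+2 = (T+1)/4); [(field; try lra) | rewrite -hT; (field; try lra)].
have s2 : sin (t *+ 2) = T * sin t by rewrite sin_mulr2n hc; (field; try lra).
rewrite mulr_natl.
case: j hj => [|[|[|[|[|[|[|[|[|[|j]]]]]]]]]] hj //=.
- by rewrite mulr0n cos0 sin0.
- have -> : t *+ 3 = - (t *+ 2) + pi by rewrite ht; ring.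
  by rewrite cosDpi' sinDpi' cosN sinN c2 s2 opprK.
- have -> : t *+ 4 = - t + pi by rewrite ht; ring.
  by rewrite cosDpi' sinDpi' cosN sinN hc opprK.
- by rewrite -ht cospi sinpi.
- have -> : t *+ 6 = t + pi by rewrite ht; ring.
  by rewrite cosDpi' sinDpi' hc.
- have -> : t *+ 7 = t *+ 2 + pi by rewrite ht; ring.
  by rewrite cosDpi' sinDpi' c2 s2.
- have -> : t *+ 8 = - (t *+ 2) + pi *+ 2 by rewrite ht; ring.
  by rewrite cosD2pi sinD2pi cosN sinN c2 s2.
- have -> : t *+ 9 = - t + pi *+ 2 by rewrite ht; ring.
  by rewrite cosD2pi sinD2pi cosN sinN hc.

Qed.
Lemma intrn (R : pzRingType) (k : nat) : ((k%:Z)%:~R : R) = k%:R.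
Proof. by []. Qed.

Lemma sum10R (R : realType) (G : nat -> R) :
  \sum_(j < 10) G j = G 0%N + G 1%N + G 2%N + G 3%N + G 4%N + G 5%N + G 6%N + G 7%N + G 8%N + G 9%N.
Proof. by rewrite !big_ord_recr big_ord0 /= add0r. Qed.

Lemma sum10N (G : nat -> nat) :
  (\sum_(j < 10) G j = G 0 + G 1 + G 2 + G 3 + G 4 + G 5 + G 6 + G 7 + G 8 + G 9)%N.
Proof. by rewrite !big_ord_recr big_ord0 /= add0n. Qed.

Theorem proposition6p9 (R : realType) (n : nat) (hn : (0 < n)%N) :
  @Lset R n `<=` Sigma `[- (n%:R : R), n%:R] `&` `[- (n%:R : R), n%:R].
Proof.
move=> x [m [hm hx]].
set t := pi / 5%:R : R.
set T := (1 + Num.sqrt 5%:R) / 2%:R : R.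
rewrite /xi -/t in hx.
rewrite (eq_bigr (fun j : 'I_10 => ((m (inord j))%:R * cv T j - 0 * sv T (sin t) j) +i*
   ((m (inord j))%:R * sv T (sin t) j + 0 * cv T j))) in hx; last first.
  move=> j _; rewrite powC natC mulC inord_val.
  by case: (@trig_tab R _ (ltn_ord j)) => -> ->.
rewrite sumC -complexr0 in hx.
case: hx => hre him.
rewrite (@sum10R R (fun j => (m (inord j))%:R * cv T j - 0 * sv T (sin t) j)) /= in hre.
rewrite (@sum10R R (fun j => (m (inord j))%:R * sv T (sin t) j + 0 * cv T j)) /= in him.
rewrite (eq_bigr (fun j : 'I_10 => m (inord j))) in hm; last by move=> j _; rewrite inord_val.
rewrite (sum10N (fun j => m (inord j))) in hm.
move: hre him hm.
move: (m (inord 0)) (m (inord 1)) (m (inord 2)) (m (inord 3)) (m (inord 4))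
  (m (inord 5)) (m (inord 6)) (m (inord 7)) (m (inord 8)) (m (inord 9)).
move=> m0 m1 m2 m3 m4 m5 m6 m7 m8 m9 hre him hm.
have pi0 := @pi_gt0 R.
have hs : 0 < sin t.
  apply: sin_gt0_pi; rewrite /t; apply/andP; split; first exact: divr_gt0.
  rewrite ltr_pdivrMr ?ltr0n // ltr_pMr //; by rewrite ltr1n.
have hAB : (m1%:R + m4%:R - m6%:R - m9%:R) + T * (m2%:R + m3%:R - m7%:R - m8%:R) = 0 :> R.
  have : sin t * ((m1%:R + m4%:R - m6%:R - m9%:R) + T * (m2%:R + m3%:R - m7%:R - m8%:R)) = 0.
    by rewrite -him; ring.
  by move/eqP; rewrite mulf_eq0 gt_eqF //= => /eqP.
have hz : ((m1%:Z + m4%:Z - m6%:Z - m9%:Z)%:~R : R) + (m2%:Z + m3%:Z - m7%:Z - m8%:Z)%:~R * T = 0.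
  rewrite -[RHS]hAB /T; ring.
have [ha hb] := @tau_irr R _ _ hz.
have e1 : (m1 + m4 = m6 + m9)%N by lia.
have e2 : (m2 + m3 = m7 + m8)%N by lia.
have r1 : m1%:R + m4%:R = m6%:R + m9%:R :> R by rewrite -!natrD e1.
have r2 : m2%:R + m3%:R = m7%:R + m8%:R :> R by rewrite -!natrD e2.
have hm' : m0%:R + m1%:R + m2%:R + m3%:R + m4%:R + m5%:R + m6%:R + m7%:R + m8%:R + m9%:R <= n%:R :> R.
  by rewrite -!natrD ler_nat.
have s5 : Num.sqrt (5%:R : R) ^+ 2 = 5%:R by rewrite sqr_sqrtr // ler0n.
have s50 : 0 <= Num.sqrt (5%:R : R) by [].
have hT1 : 3/2 < T.
  rewrite /T; move: s5 s50; set q := Num.sqrt _ => s5 s50. nra.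
have hT2 : T < 2.
  rewrite /T; move: s5 s50; set q := Num.sqrt _ => s5 s50. nra.

have r1' : m1%:R = m6%:R + m9%:R - m4%:R :> R by lra.
have r2' : m2%:R = m7%:R + m8%:R - m3%:R :> R by lra.
have hx : x = (m0%:R - m5%:R - m8%:R + m3%:R) + (m9%:R - m4%:R + m8%:R - m3%:R) * T.
  by rewrite -hre r1' r2'; field; lra.
clear hre him hAB hz ha hb e1 e2 r1' r2'.
have mp : forall k : nat, 0 <= k%:R :> R by move=> k; rewrite ler0n.
have := mp m0; have := mp m1; have := mp m2; have := mp m3; have := mp m4.
have := mp m5; have := mp m6; have := mp m7; have := mp m8; have := mp m9.
move=> h9 h8 h7 h6 h5 h4 h3 h2 h1 h0.
set S1 := m1%:R + m4%:R + m6%:R + m9%:R : R.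
set S2 := m2%:R + m3%:R + m7%:R + m8%:R : R.
set u := m9%:R - m4%:R : R.
set v := m8%:R - m3%:R : R.
have hu1 : 2 * u <= S1 by rewrite /u /S1; lra.
have hu2 : - S1 <= 2 * u by rewrite /u /S1; lra.
have hv1 : 2 * v <= S2 by rewrite /v /S2; lra.
have hv2 : - S2 <= 2 * v by rewrite /v /S2; lra.
have hp1 : 0 <= (T - 1) * (S1 - 2 * u) by apply: mulr_ge0; lra.
have hp2 : 0 <= (T - 1) * (S1 + 2 * u) by apply: mulr_ge0; lra.
have hp3 : 0 <= (2 - T) * S1 by apply: mulr_ge0; rewrite /S1; lra.
have hp4 : 0 <= T * (S2 - 2 * v) by apply: mulr_ge0; lra.
have hp5 : 0 <= T * (S2 + 2 * v) by apply: mulr_ge0; lra.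
have hp6 : 0 <= (2 - T) * S2 by apply: mulr_ge0; rewrite /S2; lra.
have hp7 : 0 <= T * (S1 - 2 * u) by apply: mulr_ge0; lra.
have hp8 : 0 <= T * (S1 + 2 * u) by apply: mulr_ge0; lra.
have hp9 : 0 <= (T - 1) * (S2 - 2 * v) by apply: mulr_ge0; lra.
have hp10 : 0 <= (T - 1) * (S2 + 2 * v) by apply: mulr_ge0; lra.
have hsum : m0%:R + m5%:R + S1 + S2 <= n%:R by rewrite /S1 /S2; lra.
have hn1 : (1 *- n : R) = - n%:R by [].
split.
  exists (m0%:Z - m5%:Z - m8%:Z + m3%:Z), (m9%:Z - m4%:Z + m8%:Z - m3%:Z); split.
    by rewrite hx /tau -/T; ring.
  rewrite /tau' /= in_itv /= hn1.
  have -> : ((m0%:Z - m5%:Z - m8%:Z + m3%:Z)%:~R : R) + (m9%:Z - m4%:Z + m8%:Z - m3%:Z)%:~R * ((1 - Num.sqrt 5%:R) / 2)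
     = (m0%:R - m5%:R) + (1 - T) * u - T * v.
    by rewrite /u /v /T; field; lra.
  apply/andP; split; rewrite /u /v in hp1 hp2 hp4 hp5 hp7 hp8 hp9 hp10 *; lra.
rewrite /= in_itv /= hn1 hx.
have -> : (m0%:R - m5%:R - m8%:R + m3%:R) + (m9%:R - m4%:R + m8%:R - m3%:R) * T
   = (m0%:R - m5%:R) + T * u + (T - 1) * v :> R by rewrite /u /v; ring.
apply/andP; split; rewrite /u /v in hp1 hp2 hp4 hp5 hp7 hp8 hp9 hp10 *; lra.
Qed.
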